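(* Let $C_2\xrightarrow{\partial_2}C_1\xrightarrow{\partial_1}C_0$ be a 2-crossed module with Peiffer lifting $\{-,-\}$. Let $P_3\subseteq C_1$ be the (normal) subgroup generated by all $\langle\langle x,y\rangle,z\rangle$ and $\langle x,\langle y,z\rangle\rangle$, and $P_3'\subseteq C_2$ the (normal) subgroup generated by all $\{\langle x,y\rangle,z\}$ and $\{x,\langle y,z\rangle\}$, for $x,y,z\in C_1$, where $\langle x,y\rangle={}^{\partial_1x}y\,xy^{-1}x^{-1}$. Put $M=C_1/P_3$, $L=C_2/P_3'$, $N=C_0$, with quotient maps $q_1:C_1\to M$, $q_2:C_2\to L$. Then $\partial:M\to N$, $\partial(q_1x)=\partial_1x$, and $\delta:L\to M$, $\delta(q_2 l)=q_1\partial_2 l$, are well-defined homomorphisms ($\partial_1(P_3)=1$, $\partial_2(P_3')=P_3$); with $C=(M^{cr})^{ab}$ and $x\mapsto\bar x$ the quotient $M\to C$, the formula $\omega(\overline{q_1x}\otimes\overline{q_1y})=q_2\{x,y\}$ ($x,y\in C_1$) defines a homomorphism $\omega:C\otimes C\to L$, and, with the $N$-actions induced from those of the 2-crossed module, $(\omega,\delta,\partial)$, i.e. $C\otimes C\xrightarrow{\omega}L\xrightarrow{\delta}M\xrightarrow{\partial}N$, is a quadratic module.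
   Context: A 2-crossed module consists of a complex of groups $C_2\xrightarrow{\partial_2}C_1\xrightarrow{\partial_1}C_0$ ($\partial_1\partial_2=1$), actions of $C_0$ on $C_1$ and $C_2$ with $\partial_2,\partial_1$ equivariant ($C_0$ acting on itself by conjugation), and a $C_0$-equivariant function $\{-,-\}:C_1\times C_1\to C_2$ such that for $l,l'\in C_2$, $m,m',m''\in C_1$, $n\in C_0$: 2CM1 $\partial_2\{m,m'\}=({}^{\partial_1 m}m')mm'^{-1}m^{-1}$; 2CM2 $\{\partial_2 l,\partial_2 l'\}=[l',l]$; 2CM3 (i) $\{mm',m''\}={}^{\partial_1 m}\{m',m''\}\{m,m'm''m'^{-1}\}$, (ii) $\{m,m'm''\}=\{m,m'\}\,{}^{mm'm^{-1}}\{m,m''\}$ where ${}^{x}l:=\{\partial_2 l,x\}l$; 2CM4 $\{m,\partial_2 l\}\{\partial_2 l,m\}={}^{\partial_1 m}l\,l^{-1}$; 2CM5 ${}^{n}\{m,m'\}=\{{}^{n}m,{}^{n}m'\}$. A pre-crossed module is a homomorphism $\partial:M\to N$ with an $N$-action on $M$ such that $\partial({}^{n}m)=n\partial(m)n^{-1}$. Its Peiffer commutator is $\langle x,y\rangle={}^{\partial x}y\,xy^{-1}x^{-1}$; $P_2(\partial)$ is the subgroup generated by Peiffer commutators, $P_3(\partial)$ the subgroup generated by Peiffer commutators of length 3 ($\langle\langle x,y\rangle,z\rangle$, $\langle x,\langle y,z\rangle\rangle$). A nil(2)-module is a pre-crossed module with $P_3(\partial)=1$. $M^{cr}=M/P_2(\partial)$,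 $G^{ab}=G/[G,G]$, and $C=(M^{cr})^{ab}$; $C\otimes C$ is the tensor product of abelian groups. A quadratic module $(\omega,\delta,\partial)$ is a diagram of homomorphisms $C\otimes C\xrightarrow{\omega}L\xrightarrow{\delta}M\xrightarrow{\partial}N$ with $w:C\otimes C\to M$ such that: QM1 $\partial:M\to N$ is a nil(2)-module, $C=(M^{cr})^{ab}$, $x\mapsto\bar x$ the quotient $M\to C$, and $w(\bar x\otimes\bar y)=\langle x,y\rangle$; QM2 $\partial\delta=1$ and $\delta\omega=w$, i.e. $\delta\omega(\bar x\otimes\bar y)={}^{\partial x}y\,xy^{-1}x^{-1}$; QM3 $L$ is an $N$-group, all maps are $N$-equivariant, and ${}^{\partial x}a=\omega\big((\bar x\otimes\overline{\delta a})(\overline{\delta a}\otimes\bar x)\big)a$ for $a\in L$, $x\in M$; QM4 $\omega(\overline{\delta a}\otimes\overline{\delta b})=[b,a]$ for $a,b\in L$. *)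

(* Defs.v *)
Set Implicit Arguments.
Unset Strict Implicit.

Record group := Group {
  car :> Type;
  gmul : car -> car -> car;
  ginv : car -> car;
  gone : car;
  gmulA : forall x y z, gmul x (gmul y z) = gmul (gmul x y) z;
  gmul1g : forall x, gmul gone x = x;
  gmulVg : forall x, gmul (ginv x) x = gone }.

Arguments gmul {g} _ _.
Arguments ginv {g} _.
Arguments gone {g}.

Declare Scope grp_scope.
Delimit Scope grp_scope with grp.
Notation "x * y" := (gmul x y) (at level 40, left associativity) : grp_scope.
Notation "x ^-1" := (ginv x) (at level 3, left associativity, format "x ^-1") : grp_scope.
Notation "1" := gone : grp_scope.
Global Open Scope grp_scope.

Definition is_hom (G H : group) (f : G -> H) : Prop :=
  forall x y : G, f (x * y) = f x * f y.

Definition comm (G : group) (x y : G) : G := x * y * x^-1 * y^-1.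

Definition is_subgroup (G : group) (S : G -> Prop) : Prop :=
  S 1 /\ (forall x y, S x -> S y -> S (x * y)) /\ (forall x, S x -> S x^-1).

Definition gen (G : group) (S : G -> Prop) (x : G) : Prop :=
  forall H : G -> Prop, is_subgroup H -> (forall s, S s -> H s) -> H x.

Definition is_action (N G : group) (a : N -> G -> G) : Prop :=
  (forall x, a 1 x = x) /\ (forall n m x, a (n * m) x = a n (a m x)) /\
  (forall n, is_hom (a n)).

Definition is_quotient (G Q : group) (q : G -> Q) (K : G -> Prop) : Prop :=
  is_hom q /\ (forall y : Q, exists x, q x = y) /\ (forall x, q x = 1 <-> K x).

Definition abelian (G : group) : Prop := forall x y : G, x * y = y * x.

Definition bilinear (A B : group) (b : A -> A -> B) : Prop :=
  (forall x y z, b (x * y) z = b x z * b y z) /\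
  (forall x y z, b x (y * z) = b x y * b x z).

(* t : C x C -> T is the tensor product C (x) C of the abelian group C with
   itself, c (x) d := t c d (universal bilinear map into abelian groups) *)
Definition is_tensor_square (C T : group) (t : C -> C -> T) : Prop :=
  abelian T /\ bilinear t /\
  forall (A : group) (b : C -> C -> A), abelian A -> bilinear b ->
    exists! f : T -> A, is_hom f /\ forall c d, f (t c d) = b c d.

Definition commutators (G : group) (z : G) : Prop := exists x y, z = comm x y.

Section Peiffer.
Variables (N M : group) (d : M -> N) (a : N -> M -> M).

Definition peiffer (x y : M) : M := a (d x) y * x * y^-1 * x^-1.

Definition pre_crossed : Prop :=
  is_hom d /\ is_action a /\ forall n m, d (a n m) = n * d m * n^-1.

Definition peiffer_set (z : M) : Prop := exists x y, z = peiffer x y.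
Definition P2 : M -> Prop := gen peiffer_set.

Definition peiffer3_set (z : M) : Prop :=
  exists x y w, z = peiffer (peiffer x y) w \/ z = peiffer x (peiffer y w).
Definition P3 : M -> Prop := gen peiffer3_set.

Definition nil2_module : Prop := pre_crossed /\ forall x, P3 x -> x = 1.
End Peiffer.

Record two_crossed_module := TwoCrossedModule {
  C0 : group; C1 : group; C2 : group;
  d2 : C2 -> C1;
  d1 : C1 -> C0;
  act1 : C0 -> C1 -> C1;
  act2 : C0 -> C2 -> C2;
  lift : C1 -> C1 -> C2;
  d2_hom : is_hom d2;
  d1_hom : is_hom d1;
  d1d2 : forall l, d1 (d2 l) = 1;
  act1_action : is_action act1;
  act2_action : is_action act2;
  d1_equiv : forall n m, d1 (act1 n m) = n * d1 m * n^-1;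
  d2_equiv : forall n l, d2 (act2 n l) = act1 n (d2 l);
  CM1 : forall m m', d2 (lift m m') = act1 (d1 m) m' * m * m'^-1 * m^-1;
  CM2 : forall l l', lift (d2 l) (d2 l') = comm l' l;
  CM3i : forall m m' m'',
      lift (m * m') m'' = act2 (d1 m) (lift m' m'') * lift m (m' * m'' * m'^-1);
  CM3ii : forall m m' m'',
      lift m (m' * m'') =
      lift m m' * (lift (d2 (lift m m'')) (m * m' * m^-1) * lift m m'');
      (* ^{x} l := {d2 l, x} l with x = m m' m^-1, l = {m, m''} *)
  CM4 : forall m l, lift m (d2 l) * lift (d2 l) m = act2 (d1 m) l * l^-1;
  CM5 : forall n m m', act2 n (lift m m') = lift (act1 n m) (act1 n m') }.

Definition P3_1 (X : two_crossed_module) : C1 X -> Prop := P3 (@d1 X) (@act1 X).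

Definition P3'_set (X : two_crossed_module) (z : C2 X) : Prop :=
  exists x y w : C1 X,
    z = @lift X (peiffer (@d1 X) (@act1 X) x y) w \/
    z = @lift X x (peiffer (@d1 X) (@act1 X) y w).
Definition P3' (X : two_crossed_module) : C2 X -> Prop := gen (@P3'_set X).

(* Quadratic module  C(x)C --omega--> L --delta--> M --d--> N, where
   bar = r o p : M -> M^cr -> (M^cr)^ab = C, and t c c' = c (x) c'. *)
Definition is_quadratic_module (N M L Mcr C T : group)
  (d : M -> N) (actM : N -> M -> M) (delta : L -> M) (actL : N -> L -> L)
  (p : M -> Mcr) (r : Mcr -> C) (t : C -> C -> T) (omega : T -> L) : Prop :=
  let bar := fun x : M => r (p x) in
  nil2_module d actM /\
  is_quotient p (P2 d actM) /\ is_quotient r (gen (@commutators Mcr)) /\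
  is_tensor_square t /\
  exists w : T -> M,
    is_hom w /\ (forall x y, w (t (bar x) (bar y)) = peiffer d actM x y) /\
    is_hom delta /\ is_hom omega /\
    (forall l, d (delta l) = 1) /\ (forall u, delta (omega u) = w u) /\
    is_action actL /\
    (exists (actC : N -> C -> C) (actT : N -> T -> T),
       is_action actC /\ (forall n x, actC n (bar x) = bar (actM n x)) /\
       is_action actT /\
       (forall n c c', actT n (t c c') = t (actC n c) (actC n c')) /\
       (forall n u, omega (actT n u) = actL n (omega u)) /\
       (forall n u, w (actT n u) = actM n (w u))) /\
    (forall n l, delta (actL n l) = actM n (delta l)) /\
    (forall (x : M) (a : L),
       actL (d x) a = omega (t (bar x) (bar (delta a)) * t (bar (delta a)) (bar x)) * a) /\
    (forall a b : L, omega (t (bar (delta a)) (bar (delta b))) = comm b a).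

(* Main.v *)
Require Import Defs.
From Stdlib Require Import ProofIrrelevance IndefiniteDescription.
Set Implicit Arguments.
Unset Strict Implicit.

Section GroupLemmas.
Variable G : group.
Implicit Types x y z : G.

Lemma mulgV x : x * x^-1 = 1.
Proof.
  rewrite <- (gmul1g (x * x^-1)).
  rewrite <- (gmulVg (x^-1)) at 1.
  rewrite <- gmulA. rewrite (gmulA (x^-1) x). rewrite gmulVg, gmul1g.
  apply gmulVg.
Qed.

Lemma mulg1 x : x * 1 = x.
Proof. rewrite <- (gmulVg x), gmulA, mulgV, gmul1g. reflexivity. Qed.

Lemma mulKg x y : x^-1 * (x * y) = y.
Proof. rewrite gmulA, gmulVg, gmul1g; reflexivity. Qed.

Lemma mulVKg x y : x * (x^-1 * y) = y.
Proof. rewrite gmulA, mulgV, gmul1g; reflexivity. Qed.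

Lemma mulg_invl x y : x * y = 1 -> x^-1 = y.
Proof. intro H. rewrite <- (mulg1 (x^-1)), <- H, mulKg. reflexivity. Qed.

Lemma invgK x : (x^-1)^-1 = x.
Proof. apply mulg_invl. apply gmulVg. Qed.

Lemma invMg x y : (x * y)^-1 = y^-1 * x^-1.
Proof. apply mulg_invl. rewrite <- gmulA, (gmulA y), mulgV, gmul1g. apply mulgV. Qed.

Lemma inv1 : (1 : G)^-1 = 1.
Proof. apply mulg_invl. apply gmul1g. Qed.

Lemma mulgI x y z : z * x = z * y -> x = y.
Proof. intro H. rewrite <- (mulKg z x), H, mulKg. reflexivity. Qed.

Lemma mulIg x y z : x * z = y * z -> x = y.
Proof. intro H. rewrite <- (mulg1 x), <- (mulgV z), gmulA, H, <- gmulA, mulgV, mulg1. reflexivity. Qed.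

Lemma mulgK x y : x * y * y^-1 = x.
Proof. rewrite <- gmulA, mulgV, mulg1. reflexivity. Qed.
Lemma mulgVK x y : x * y^-1 * y = x.
Proof. rewrite <- gmulA, gmulVg, mulg1. reflexivity. Qed.

Lemma eq_mulgV1 x y : x * y^-1 = 1 -> x = y.
Proof. intro H. rewrite <- (mulgVK x y), H, gmul1g. reflexivity. Qed.
Lemma eq_mulVg1 x y : x^-1 * y = 1 -> x = y.
Proof. intro H. rewrite <- (mulVKg x y), H, mulg1. reflexivity. Qed.

Lemma comm1_commute x y : comm x y = 1 -> x * y = y * x.
Proof. unfold comm. intro H. apply eq_mulgV1 in H. rewrite <- (mulgVK (x*y) x), H. reflexivity. Qed.
Lemma commute_comm1 x y : x * y = y * x -> comm x y = 1.
Proof. unfold comm. intro H. rewrite H, mulgK, mulgV. reflexivity. Qed.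

End GroupLemmas.

Ltac gsimpl := repeat progress (rewrite ?invMg, ?invgK, ?inv1, <- ?gmulA, ?mulKg, ?mulVKg, ?gmulVg, ?mulgV, ?gmul1g, ?mulg1).

Section Homs.
Variables (G H : group) (f : G -> H).
Hypothesis fh : is_hom f.
Lemma hom1 : f 1 = 1.
Proof. apply (mulgI (z := f 1)). rewrite <- fh, gmul1g, mulg1. reflexivity. Qed.
Lemma homV x : f x^-1 = (f x)^-1.
Proof. symmetry. apply mulg_invl. rewrite <- fh, mulgV. apply hom1. Qed.
Lemma hom_comm x y : f (comm x y) = comm (f x) (f y).
Proof. unfold comm. rewrite !fh, !homV. reflexivity. Qed.
End Homs.

Lemma hom_comp (G H K : group) (f : G -> H) (g : H -> K) :
  is_hom f -> is_hom g -> is_hom (fun x => g (f x)).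
Proof. intros hf hg x y. rewrite hf, hg. reflexivity. Qed.

Lemma test (G : group) (a b c : G) : (a * b^-1 * c)^-1 * a * (b^-1 * c) * 1 = 1.
Proof. gsimpl. reflexivity. Qed.

Section Sub.
Variable G : group.
Implicit Types (x y : G) (S : G -> Prop).

Lemma gen_in S x : S x -> gen S x.
Proof. intros Hx H _ HS. auto. Qed.

Lemma gen_subgroup S : is_subgroup (gen S).
Proof.
  split; [|split].
  - intros H [H1 _] _. exact H1.
  - intros x y hx hy H HH HS. destruct HH as [? [Hm ?]]. apply Hm; [apply hx|apply hy]; auto; repeat split; auto.
  - intros x hx H HH HS. destruct HH as [? [? Hi]]. apply Hi. apply hx; auto; repeat split; auto.
Qed.

Lemma gen_ind S (H : G -> Prop) : is_subgroup H -> (forall s, S s -> H s) -> forall x, gen S x -> H x.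
Proof. intros HH HS x hx. apply hx; auto. Qed.

Lemma sub_div S x y : is_subgroup S -> S x -> S y -> S (x * y^-1).
Proof. intros [h1 [hm hi]] hx hy. apply hm; auto. Qed.
End Sub.

Lemma kernel_subgroup (G H : group) (f : G -> H) : is_hom f -> is_subgroup (fun x => f x = 1).
Proof.
  intro hf. split; [|split].
  - apply hom1; auto.
  - intros x y hx hy. rewrite hf, hx, hy. apply gmul1g.
  - intros x hx. rewrite (homV hf), hx. apply inv1.
Qed.

Lemma preimage_subgroup (G H : group) (f : G -> H) (S : H -> Prop) :
  is_hom f -> is_subgroup S -> is_subgroup (fun x => S (f x)).
Proof.
  intros hf [h1 [hm hi]]. split; [|split].
  - rewrite (hom1 hf). auto.
  - intros x y hx hy. rewrite hf. auto.
  - intros x hx. rewrite (homV hf). auto.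
Qed.

Section Quot.
Variables (G Q : group) (q : G -> Q) (K : G -> Prop).
Hypothesis hq : is_quotient q K.

Lemma quot_hom : is_hom q. Proof. apply hq. Qed.
Lemma quot_surj y : exists x, q x = y. Proof. apply hq. Qed.
Lemma quot_ker x : K x -> q x = 1. Proof. apply hq. Qed.
Lemma quot_ker' x : q x = 1 -> K x. Proof. apply hq. Qed.

Lemma quot_K_subgroup : is_subgroup K.
Proof.
  destruct hq as [hh [_ hk]].
  split; [|split].
  - apply hk. apply (hom1 hh).
  - intros x y hx hy. apply hk. rewrite hh. apply hk in hx. apply hk in hy. rewrite hx, hy. apply gmul1g.
  - intros x hx. apply hk. rewrite (homV hh). apply hk in hx. rewrite hx. apply inv1.
Qed.

Lemma quot_eqK x y : q x = q y -> K (x * y^-1).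
Proof. intro e. apply quot_ker'. rewrite quot_hom, (homV quot_hom), e. apply mulgV. Qed.

Lemma quot_factor (H : group) (f : G -> H) : is_hom f -> (forall k, K k -> f k = 1) ->
  forall x y, q x = q y -> f x = f y.
Proof. intros hf hk x y e. apply eq_mulgV1. rewrite <- (homV hf), <- hf. apply hk, quot_eqK, e. Qed.

Lemma lift_subgroup (S : G -> Prop) : is_subgroup S -> (forall k, K k -> S k) ->
  is_subgroup (fun u => forall x, q x = u -> S x).
Proof.
  intros hS hK.
  assert (key : forall x y, q x = q y -> S y -> S x).
  { intros x y e hy. apply quot_eqK in e. apply hK in e.
    destruct hS as [_ [hm _]]. rewrite <- (mulgVK x y). apply hm; auto. }
  split; [|split].
  - intros x e. apply key with (y := 1). rewrite e. symmetry. apply (hom1 quot_hom). apply hS.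
  - intros u v hu hv x e. destruct (quot_surj u) as [a ea]. destruct (quot_surj v) as [b eb].
    apply key with (y := a * b). rewrite quot_hom, ea, eb. auto.
    apply hS; auto.
  - intros u hu x e. destruct (quot_surj u) as [a ea]. apply key with (y := a^-1).
    rewrite (homV quot_hom), ea. auto. apply hS; auto.
Qed.

Lemma lift_iff (S : G -> Prop) : is_subgroup S -> (forall k, K k -> S k) ->
  forall y, (forall x, q x = q y -> S x) <-> S y.
Proof.
  intros hS hK y. split.
  - intro h. apply h. reflexivity.
  - intros hy x e. apply quot_eqK in e. apply hK in e.
    destruct hS as [_ [hm _]]. rewrite <- (mulgVK x y). apply hm; auto.
Qed.

Lemma quot_gen_lift (S : G -> Prop) (T : Q -> Prop) : is_subgroup S -> (forall k, K k -> S k) ->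
  (forall x, T (q x) -> S x) -> forall x, gen T (q x) -> S x.
Proof.
  intros hS hK hT x hx.
  apply (@gen_ind Q T (fun u => forall x, q x = u -> S x)) with (x := q x); auto.
  apply lift_subgroup; auto.
  intros s hs z e. apply hT. rewrite e. auto.
Qed.

End Quot.

Definition central (G : group) (x : G) : Prop := forall y, x * y = y * x.

Section Center.
Variable G : group.
Definition Zcar := {x : G | central x}.
Lemma central1 : central (1 : G).
Proof. intro y. rewrite gmul1g, mulg1. reflexivity. Qed.
Lemma centralM (x y : G) : central x -> central y -> central (x * y).
Proof. intros hx hy z. rewrite <- gmulA, hy, gmulA, hx, gmulA. reflexivity. Qed.
Lemma centralV (x : G) : central x -> central x^-1.
Proof. intros hx z. apply (mulgI (z := x)). rewrite mulVKg, gmulA, hx, mulgK. reflexivity. Qed.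
Definition Zmul (a b : Zcar) : Zcar :=
  exist _ (proj1_sig a * proj1_sig b) (centralM (proj2_sig a) (proj2_sig b)).
Definition Zinv (a : Zcar) : Zcar := exist _ (proj1_sig a)^-1 (centralV (proj2_sig a)).
Definition Zone : Zcar := exist _ 1 central1.
Lemma Zeq (a b : Zcar) : proj1_sig a = proj1_sig b -> a = b.
Proof. destruct a, b; simpl. intro e; subst. f_equal. apply proof_irrelevance. Qed.
Definition Zgroup : group.
Proof.
  refine (@Group Zcar Zmul Zinv Zone _ _ _).
  - intros; apply Zeq; simpl; apply gmulA.
  - intros; apply Zeq; simpl; apply gmul1g.
  - intros; apply Zeq; simpl; apply gmulVg.
Defined.
Lemma Zgroup_abelian : abelian Zgroup.
Proof. intros [x hx] [y hy]. apply Zeq; simpl. apply hx. Qed.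
End Center.

Section Tensor.
Variables (C T : group) (t : C -> C -> T).
Hypothesis ht : is_tensor_square t.

Lemma tensor_lift (L : group) (b : C -> C -> L) :
  (forall c d, central (b c d)) -> bilinear b ->
  exists f : T -> L, is_hom f /\ (forall c d, f (t c d) = b c d) /\ (forall u, central (f u)).
Proof.
  intros hc [hb1 hb2].
  destruct ht as [_ [_ U]].
  destruct (U (Zgroup L) (fun c d => exist _ (b c d) (hc c d)) (@Zgroup_abelian L)) as [f [[hf hft] _]].
  - split; intros; apply Zeq; simpl; auto.
  - exists (fun u => proj1_sig (f u)). split.
    + intros x y. rewrite hf. reflexivity.
    + split. intros c d. rewrite hft. reflexivity.
      intro u. exact (proj2_sig (f u)).
Qed.

Lemma tensor_ext (L : group) (g1 g2 : T -> L) : is_hom g1 -> is_hom g2 ->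
  (forall u, central (g1 u)) -> (forall u, central (g2 u)) ->
  (forall c d, g1 (t c d) = g2 (t c d)) -> forall u, g1 u = g2 u.
Proof.
  intros h1 h2 c1 c2 e u.
  destruct ht as [_ [[tb1 tb2] U]].
  pose (G1 := fun u => exist _ (g1 u) (c1 u) : Zgroup L).
  pose (G2 := fun u => exist _ (g2 u) (c2 u) : Zgroup L).
  destruct (U (Zgroup L) (fun c d => G1 (t c d)) (@Zgroup_abelian L)) as [f [_ uq]].
  - split; intros; apply Zeq; simpl; rewrite ?tb1, ?tb2, h1; reflexivity.
  - assert (E1 := uq G1). assert (E2 := uq G2).
    assert (f = G1). { apply E1. split. intros x y; apply Zeq; simpl; apply h1. reflexivity. }
    assert (f = G2). { apply E2. split. intros x y; apply Zeq; simpl; apply h2.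
      intros; apply Zeq; simpl; symmetry; apply e. }
    assert (G1 u = G2 u) by congruence.
    apply (f_equal (@proj1_sig _ _)) in H1. exact H1.
Qed.

Lemma tensor_abelian : abelian T. Proof. apply ht. Qed.
Lemma tensor_bil : bilinear t. Proof. apply ht. Qed.
End Tensor.

Section Act.
Variables (N G : group) (a : N -> G -> G).
Hypothesis ha : is_action a.
Lemma act_hom n : is_hom (a n). Proof. apply ha. Qed.
Lemma act_comp n m x : a (n * m) x = a n (a m x). Proof. apply ha. Qed.
Lemma act_one x : a 1 x = x. Proof. apply ha. Qed.
Lemma act_K n x : a n^-1 (a n x) = x.
Proof. rewrite <- act_comp, gmulVg. apply act_one. Qed.
Lemma act_VK n x : a n (a n^-1 x) = x.
Proof. rewrite <- act_comp, mulgV. apply act_one. Qed.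
Lemma act_central n z : central z -> central (a n z).
Proof.
  intros hz y. rewrite <- (act_VK n y), <- !(act_hom n), hz. reflexivity.
Qed.
End Act.

Section PartA.
Variable X : two_crossed_module.
Notation pf := (peiffer (@d1 X) (@act1 X)).

Lemma a1_hom n : is_hom (@act1 X n). Proof. apply act_hom, act1_action. Qed.
Lemma a2_hom n : is_hom (@act2 X n). Proof. apply act_hom, act2_action. Qed.

Lemma d2_lift (x y : C1 X) : d2 (lift x y) = pf x y.
Proof. exact (CM1 x y). Qed.

Lemma peiffer_d1 (x y : C1 X) : d1 (pf x y) = 1.
Proof.
  unfold peiffer. rewrite !(@d1_hom X), !(homV (@d1_hom X)), d1_equiv. gsimpl. reflexivity.
Qed.

Lemma act_peiffer n (x y : C1 X) : act1 n (pf x y) = pf (act1 n x) (act1 n y).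
Proof.
  unfold peiffer. rewrite !(a1_hom n), !(homV (a1_hom n)).
  rewrite d1_equiv, <- !(act_comp (act1_action X)). rewrite (mulgVK). reflexivity.
Qed.

Lemma P3_d1 x : @P3_1 X x -> d1 x = 1.
Proof.
  apply (@gen_ind _ _ (fun x => d1 x = 1)).  apply kernel_subgroup, d1_hom.
  intros s [x0 [y0 [w0 [e|e]]]]; subst; apply peiffer_d1.
Qed.

Lemma P3'_d2 l : @P3' X l -> @P3_1 X (d2 l).
Proof.
  apply (@gen_ind _ _ (fun l => @P3_1 X (d2 l))).  apply preimage_subgroup. apply d2_hom. apply gen_subgroup.
  intros s [x0 [y0 [w0 [e|e]]]]; subst; rewrite d2_lift; apply gen_in;
  exists x0, y0, w0; auto.
Qed.

Lemma P3_d2 x : @P3_1 X x -> exists l, @P3' X l /\ d2 l = x.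
Proof.
  apply (@gen_ind _ _ (fun x => exists l, @P3' X l /\ d2 l = x)). 
  - split; [|split].
    + exists 1. split. apply gen_subgroup. apply (hom1 (@d2_hom X)).
    + intros a b [la [ha ea]] [lb [hb eb]]. exists (la * lb). split.
      apply gen_subgroup; auto. rewrite (@d2_hom X); congruence.
    + intros a [la [ha ea]]. exists (la^-1). split.
      apply gen_subgroup; auto. rewrite (homV (@d2_hom X)); congruence.
  - intros s [x0 [y0 [w0 [e|e]]]]; subst.
    + exists (lift (pf x0 y0) w0). split. apply gen_in. exists x0, y0, w0; auto. apply d2_lift.
    + exists (lift x0 (pf y0 w0)). split. apply gen_in. exists x0, y0, w0; auto. apply d2_lift.
Qed.

Lemma P3_act n x : @P3_1 X x -> @P3_1 X (act1 n x).
Proof.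
  apply (@gen_ind _ _ (fun x => @P3_1 X (act1 n x))).  apply preimage_subgroup. apply a1_hom. apply gen_subgroup.
  intros s [x0 [y0 [w0 [e|e]]]]; subst; rewrite !act_peiffer; apply gen_in;
  do 3 eexists; eauto.
Qed.

Lemma P3'_act n l : @P3' X l -> @P3' X (act2 n l).
Proof.
  apply (@gen_ind _ _ (fun l => @P3' X (act2 n l))).  apply preimage_subgroup. apply a2_hom. apply gen_subgroup.
  intros s [x0 [y0 [w0 [e|e]]]]; subst; rewrite CM5, !act_peiffer; apply gen_in;
  do 3 eexists; eauto.
Qed.
End PartA.

Section PartB.
Variables (X : two_crossed_module) (M L : group) (q1 : C1 X -> M) (q2 : C2 X -> L).
Hypothesis hq1 : is_quotient q1 (@P3_1 X).
Hypothesis hq2 : is_quotient q2 (@P3' X).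
Notation pf := (peiffer (@d1 X) (@act1 X)).

Lemma q1h : is_hom q1. Proof. apply hq1. Qed.
Lemma q2h : is_hom q2. Proof. apply hq2. Qed.

Lemma q2_P3'l x y w : q2 (lift (pf x y) w) = 1.
Proof. apply (quot_ker hq2). apply gen_in. exists x, y, w. auto. Qed.
Lemma q2_P3'r x y w : q2 (lift x (pf y w)) = 1.
Proof. apply (quot_ker hq2). apply gen_in. exists x, y, w. auto. Qed.

Lemma lift_central x y : central (q2 (lift x y)).
Proof.
  intro l. destruct (quot_surj hq2 l) as [l0 <-].
  apply comm1_commute. rewrite <- (hom_comm q2h), <- CM2, d2_lift. apply q2_P3'r.
Qed.

Lemma lift_r m m' m'' : q2 (lift m (m' * m'')) = q2 (lift m m') * q2 (lift m m'').
Proof.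
  rewrite CM3ii, !q2h, d2_lift, q2_P3'l, gmul1g. reflexivity.
Qed.
Lemma Rh y : is_hom (fun z => q2 (lift y z)).
Proof. intros a b. apply lift_r. Qed.

Lemma q2_act2_lift m m' m'' : q2 (act2 (d1 m) (lift m' m'')) = q2 (lift m' m'').
Proof.
  apply eq_mulgV1. rewrite <- (homV q2h), <- q2h, <- CM4, q2h, !d2_lift, q2_P3'l, q2_P3'r.
  apply gmul1g.
Qed.

Lemma lift_l m m' m'' : q2 (lift (m * m') m'') = q2 (lift m m'') * q2 (lift m' m'').
Proof.
  rewrite CM3i, q2h, q2_act2_lift, !lift_r, (homV (Rh m)).
  rewrite (lift_central m m'), mulgK. apply lift_central.
Qed.
Lemma Lh y : is_hom (fun z => q2 (lift z y)).
Proof. intros a b. apply lift_l. Qed.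

Definition Kset (z : C1 X) : Prop := forall y, q2 (lift z y) = 1 /\ q2 (lift y z) = 1.

Lemma Kset_subgroup : is_subgroup Kset.
Proof.
  split; [|split].
  - intro y. split; [apply (hom1 (Lh y))|apply (hom1 (Rh y))].
  - intros a b ha hb y. destruct (ha y), (hb y). split.
    + rewrite (Lh y a b). simpl. rewrite H, H1. apply gmul1g.
    + rewrite (Rh y a b). simpl. rewrite H0, H2. apply gmul1g.
  - intros a ha y. destruct (ha y). split.
    + rewrite (homV (Lh y) a). simpl. rewrite H. apply inv1.
    + rewrite (homV (Rh y) a). simpl. rewrite H0. apply inv1.
Qed.

Lemma Kset_peiffer a b : Kset (pf a b).
Proof. intro y. split; [apply q2_P3'l|apply q2_P3'r]. Qed.

Lemma Kset_comm a b : Kset (comm a b).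
Proof.
  intro y. split.
  - rewrite (hom_comm (Lh y) a b). apply commute_comm1. apply lift_central.
  - rewrite (hom_comm (Rh y) a b). apply commute_comm1. apply lift_central.
Qed.

Lemma Kset_P3 z : @P3_1 X z -> Kset z.
Proof.
  apply (@gen_ind _ _ Kset). apply Kset_subgroup.
  intros s [x0 [y0 [w0 [e|e]]]]; subst; apply Kset_peiffer.
Qed.

Lemma Kset_lift x x' y : Kset (x * x'^-1) ->
  q2 (lift x y) = q2 (lift x' y) /\ q2 (lift y x) = q2 (lift y x').
Proof.
  intro hk. rewrite <- (mulgVK x x'). destruct (hk y) as [h1 h2]. split.
  - rewrite (Lh y (x * x'^-1) x'). simpl. rewrite h1. apply gmul1g.
  - rewrite (Rh y (x * x'^-1) x'). simpl. rewrite h2. apply gmul1g.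
Qed.

Definition s1 (m : M) : C1 X := proj1_sig (constructive_indefinite_description _ (quot_surj hq1 m)).
Lemma s1K m : q1 (s1 m) = m.
Proof. unfold s1. destruct constructive_indefinite_description. auto. Qed.
Definition s2 (l : L) : C2 X := proj1_sig (constructive_indefinite_description _ (quot_surj hq2 l)).
Lemma s2K l : q2 (s2 l) = l.
Proof. unfold s2. destruct constructive_indefinite_description. auto. Qed.

Definition dM (m : M) : C0 X := d1 (s1 m).
Definition delta (l : L) : M := q1 (d2 (s2 l)).
Definition actM (n : C0 X) (m : M) : M := q1 (act1 n (s1 m)).
Definition actL (n : C0 X) (l : L) : L := q2 (act2 n (s2 l)).

Lemma dM_q1 x : dM (q1 x) = d1 x.
Proof. apply (quot_factor hq1 (@d1_hom X)). apply P3_d1. apply s1K. Qed.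

Lemma delta_q2 l : delta (q2 l) = q1 (d2 l).
Proof.
  apply (quot_factor hq2 (hom_comp (@d2_hom X) q1h)).
  intros k hk. apply (quot_ker hq1). apply P3'_d2; auto. apply s2K.
Qed.

Lemma actM_q1 n x : actM n (q1 x) = q1 (act1 n x).
Proof.
  apply (quot_factor hq1 (hom_comp (a1_hom n) q1h)).
  intros k hk. apply (quot_ker hq1). apply P3_act; auto. apply s1K.
Qed.

Lemma actL_q2 n l : actL n (q2 l) = q2 (act2 n l).
Proof.
  apply (quot_factor hq2 (hom_comp (a2_hom n) q2h)).
  intros k hk. apply (quot_ker hq2). apply P3'_act; auto. apply s2K.
Qed.

Lemma q1_ind (P : M -> Prop) : (forall x, P (q1 x)) -> forall m, P m.
Proof. intros h m. rewrite <- (s1K m). apply h. Qed.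
Lemma q2_ind (P : L -> Prop) : (forall x, P (q2 x)) -> forall m, P m.
Proof. intros h m. rewrite <- (s2K m). apply h. Qed.

Lemma dM_hom : is_hom dM.
Proof.
  intros a b. revert a. apply q1_ind. intro x. revert b. apply q1_ind. intro y.
  rewrite <- q1h, !dM_q1. apply d1_hom.
Qed.

Lemma delta_hom : is_hom delta.
Proof.
  intros a b. revert a. apply q2_ind. intro x. revert b. apply q2_ind. intro y.
  rewrite <- q2h, !delta_q2, d2_hom. apply q1h.
Qed.

Lemma actM_hom n : is_hom (actM n).
Proof.
  intros a b. revert a. apply q1_ind. intro x. revert b. apply q1_ind. intro y.
  rewrite <- q1h, !actM_q1, a1_hom. apply q1h.
Qed.

Lemma actL_hom n : is_hom (actL n).
Proof.
  intros a b. revert a. apply q2_ind. intro x. revert b. apply q2_ind. intro y.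
  rewrite <- q2h, !actL_q2, a2_hom. apply q2h.
Qed.

Lemma actM_action : is_action actM.
Proof.
  split; [|split].
  - apply q1_ind. intro x. rewrite actM_q1, (act_one (act1_action X)). reflexivity.
  - intros n m. apply q1_ind. intro x. rewrite !actM_q1, (act_comp (act1_action X)). reflexivity.
  - apply actM_hom.
Qed.

Lemma actL_action : is_action actL.
Proof.
  split; [|split].
  - apply q2_ind. intro x. rewrite actL_q2, (act_one (act2_action X)). reflexivity.
  - intros n m. apply q2_ind. intro x. rewrite !actL_q2, (act_comp (act2_action X)). reflexivity.
  - apply actL_hom.
Qed.

Notation pfM := (peiffer dM actM).

Lemma pfM_q1 x y : pfM (q1 x) (q1 y) = q1 (pf x y).
Proof.
  unfold peiffer. rewrite dM_q1, actM_q1, !q1h, !(homV q1h). reflexivity.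
Qed.

Lemma dM_equiv n m : dM (actM n m) = n * dM m * n^-1.
Proof. revert m. apply q1_ind. intro x. rewrite actM_q1, !dM_q1. apply d1_equiv. Qed.

Lemma delta_equiv n l : delta (actL n l) = actM n (delta l).
Proof. revert l. apply q2_ind. intro x. rewrite actL_q2, !delta_q2, actM_q1, d2_equiv. reflexivity. Qed.

Lemma dM_delta l : dM (delta l) = 1.
Proof. revert l. apply q2_ind. intro x. rewrite delta_q2, dM_q1. apply d1d2. Qed.

Lemma actM_peiffer n a b : actM n (pfM a b) = pfM (actM n a) (actM n b).
Proof.
  revert a. apply q1_ind. intro x. revert b. apply q1_ind. intro y.
  rewrite pfM_q1, !actM_q1, pfM_q1, act_peiffer. reflexivity.
Qed.

Lemma nil2 : nil2_module dM actM.
Proof.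
  split.
  - split; [apply dM_hom|split; [apply actM_action|apply dM_equiv]].
  - apply (@gen_ind _ _ (fun x => x = 1)).
    + split; [reflexivity|split].
      * intros a b -> ->. apply gmul1g.
      * intros a ->. apply inv1.
    + intros s [a [b [c [e|e]]]]; subst;
      rewrite <- (s1K a), <- (s1K b), <- (s1K c), !pfM_q1; apply (quot_ker hq1);
      apply gen_in; do 3 eexists; eauto.
Qed.

Section PartC.
Variables (Mcr C T : group) (p : M -> Mcr) (r : Mcr -> C) (t : C -> C -> T).
Hypothesis hp : is_quotient p (P2 dM actM).
Hypothesis hr : is_quotient r (gen (@commutators Mcr)).
Hypothesis ht : is_tensor_square t.

Definition bar (m : M) : C := r (p m).
Lemma bar_hom : is_hom bar.
Proof. apply (hom_comp (quot_hom hp) (quot_hom hr)). Qed.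

Lemma bar_comm x y : bar (comm x y) = 1.
Proof.
  unfold bar. rewrite (hom_comm (quot_hom hp)). apply (quot_ker hr). apply gen_in.
  do 2 eexists; reflexivity.
Qed.

Lemma bar_pf a b : bar (pfM a b) = 1.
Proof.
  unfold bar. rewrite (quot_ker hp). apply (hom1 (quot_hom hr)).
  apply gen_in. do 2 eexists; reflexivity.
Qed.

Lemma bar_ind (S : M -> Prop) : is_subgroup S -> (forall a b, S (pfM a b)) ->
  (forall a b, S (comm a b)) -> forall m, bar m = 1 -> S m.
Proof.
  intros hS hpf hc m e. apply (quot_ker' hr) in e.
  assert (hP2 : forall k, P2 dM actM k -> S k).
  { apply (@gen_ind _ _ S); auto. intros s [a [b ->]]. auto. }
  apply (quot_gen_lift hp) with (T := @commutators Mcr); auto.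
  intros x [u [v e']]. destruct (quot_surj hp u) as [a <-]. destruct (quot_surj hp v) as [b <-].
  rewrite <- (hom_comm (quot_hom hp)) in e'.
  apply (proj2 (lift_iff hp hS hP2 (comm a b))); auto.
Qed.

Lemma bar_ker z : bar (q1 z) = 1 -> Kset z.
Proof.
  intro e.
  assert (hSM := lift_subgroup hq1 Kset_subgroup Kset_P3).
  assert (H : forall m, bar m = 1 -> forall z, q1 z = m -> Kset z).
  { apply (bar_ind (S := fun m => forall z, q1 z = m -> Kset z)); auto.
    - intros a b. rewrite <- (s1K a), <- (s1K b), pfM_q1.
      apply (lift_iff hq1 Kset_subgroup Kset_P3). apply Kset_peiffer.
    - intros a b. rewrite <- (s1K a), <- (s1K b), <- (hom_comm q1h).
      apply (lift_iff hq1 Kset_subgroup Kset_P3). apply Kset_comm. }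
  exact (H _ e z eq_refl).
Qed.

Lemma WD x x' y : bar (q1 x) = bar (q1 x') ->
  q2 (lift x y) = q2 (lift x' y) /\ q2 (lift y x) = q2 (lift y x').
Proof.
  intro e. apply Kset_lift. apply bar_ker.
  rewrite q1h, (homV q1h), bar_hom, (homV bar_hom), e. apply mulgV.
Qed.

Lemma bar_act n m : bar m = 1 -> bar (actM n m) = 1.
Proof.
  apply (bar_ind (S := fun m => bar (actM n m) = 1)).
  - apply kernel_subgroup. apply (hom_comp (actM_hom n) bar_hom).
  - intros a b. rewrite actM_peiffer. apply bar_pf.
  - intros a b. rewrite (hom_comm (actM_hom n)). apply bar_comm.
Qed.

Lemma barq_surj c : exists x, bar (q1 x) = c.
Proof.
  destruct (quot_surj hr c) as [u <-]. destruct (quot_surj hp u) as [m <-].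
  exists (s1 m). rewrite s1K. reflexivity.
Qed.

Definition sC (c : C) : C1 X := proj1_sig (constructive_indefinite_description _ (barq_surj c)).
Lemma sCK c : bar (q1 (sC c)) = c.
Proof. unfold sC. destruct constructive_indefinite_description. auto. Qed.

Lemma C_ind (P : C -> Prop) : (forall x, P (bar (q1 x))) -> forall c, P c.
Proof. intros h c. rewrite <- (sCK c). apply h. Qed.

Definition bC (c d : C) : L := q2 (lift (sC c) (sC d)).

Lemma bC_bar x y : bC (bar (q1 x)) (bar (q1 y)) = q2 (lift x y).
Proof.
  unfold bC. rewrite (proj1 (@WD (sC (bar (q1 x))) x (sC (bar (q1 y))) (sCK _))).
  apply (proj2 (@WD _ _ x (sCK _))).
Qed.

Lemma bC_bil : bilinear bC.
Proof.
  split.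
  - intros a b c; rewrite <- (sCK a), <- (sCK b), <- (sCK c).
    rewrite <- bar_hom, <- q1h, !bC_bar. apply lift_l.
  - intros a b c; rewrite <- (sCK a), <- (sCK b), <- (sCK c).
    rewrite <- bar_hom, <- q1h, !bC_bar. apply lift_r.
Qed.

Lemma omega_ex : exists f : T -> L, is_hom f /\ (forall c d, f (t c d) = bC c d) /\ (forall u, central (f u)).
Proof. apply tensor_lift; auto. intros. apply lift_central. apply bC_bil. Qed.

Definition omega : T -> L := proj1_sig (constructive_indefinite_description _ omega_ex).
Lemma omega_spec : is_hom omega /\ (forall c d, omega (t c d) = bC c d) /\ (forall u, central (omega u)).
Proof. unfold omega. destruct constructive_indefinite_description. auto. Qed.
Lemma omega_hom : is_hom omega. Proof. apply omega_spec. Qed.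
Lemma omega_central u : central (omega u). Proof. apply omega_spec. Qed.
Lemma omega_t x y : omega (t (bar (q1 x)) (bar (q1 y))) = q2 (lift x y).
Proof. rewrite (proj1 (proj2 omega_spec)). apply bC_bar. Qed.

Definition actC (n : C0 X) (c : C) : C := bar (actM n (q1 (sC c))).
Lemma actC_bar n m : actC n (bar m) = bar (actM n m).
Proof.
  unfold actC. apply eq_mulgV1. rewrite <- (homV bar_hom), <- (homV (actM_hom n)), <- bar_hom, <- (actM_hom n).
  apply bar_act. rewrite bar_hom, (homV bar_hom), sCK. apply mulgV.
Qed.

Lemma actC_hom n : is_hom (actC n).
Proof.
  intros a b. revert a. apply C_ind. intro x. revert b. apply C_ind. intro y.
  rewrite <- bar_hom, !actC_bar, actM_hom. apply bar_hom.
Qed.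

Lemma actC_action : is_action actC.
Proof.
  split; [|split].
  - apply C_ind. intro x. rewrite actC_bar, (act_one actM_action). reflexivity.
  - intros n m. apply C_ind. intro x. rewrite !actC_bar, (act_comp actM_action). reflexivity.
  - apply actC_hom.
Qed.

Lemma T_central (u : T) : central u.
Proof. intro v. apply (tensor_abelian ht). Qed.

Lemma actT_ex n : exists f : T -> T, is_hom f /\ (forall c d, f (t c d) = t (actC n c) (actC n d)) /\ (forall u, central (f u)).
Proof.
  apply tensor_lift; auto. intros; apply T_central.
  destruct (tensor_bil ht) as [b1 b2]. split; intros; rewrite actC_hom; auto.
Qed.

Definition actT (n : C0 X) : T -> T := proj1_sig (constructive_indefinite_description _ (actT_ex n)).
Lemma actT_spec n : is_hom (actT n) /\ (forall c d, actT n (t c d) = t (actC n c) (actC n d)).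
Proof. unfold actT. destruct constructive_indefinite_description as [f Hf]. simpl. split; apply Hf. Qed.

Lemma actT_action : is_action actT.
Proof.
  split; [|split].
  - intro u. apply (tensor_ext ht (g1 := actT 1) (g2 := fun u => u)).
    apply actT_spec. intros a b; reflexivity. intros; apply T_central. intros; apply T_central.
    intros c d. rewrite (proj2 (actT_spec 1)), !(act_one actC_action). reflexivity.
  - intros n m u. apply (tensor_ext ht (g1 := actT (n * m)) (g2 := fun u => actT n (actT m u))).
    apply actT_spec. apply hom_comp; apply actT_spec. intros; apply T_central. intros; apply T_central.
    intros c d. rewrite !(proj2 (actT_spec _)), !(act_comp actC_action). reflexivity.
  - intro n. apply actT_spec.
Qed.

Lemma omega_equiv n u : omega (actT n u) = actL n (omega u).
Proof.
  apply (tensor_ext ht (g1 := fun u => omega (actT n u)) (g2 := fun u => actL n (omega u))).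
  - apply hom_comp. apply actT_spec. apply omega_hom.
  - apply hom_comp. apply omega_hom. apply actL_hom.
  - intros; apply omega_central.
  - intros; apply (act_central actL_action), omega_central.
  - intros a b; rewrite <- (sCK a), <- (sCK b).
    rewrite (proj2 (actT_spec _)), !actC_bar, !actM_q1, !omega_t, <- CM5, actL_q2. reflexivity.
Qed.

End PartC.
End PartB.

Theorem proposition5p2 (X : two_crossed_module)
  (M L : group) (q1 : C1 X -> M) (q2 : C2 X -> L) :
  is_quotient q1 (@P3_1 X) ->          (* M = C1 / P3 *)
  is_quotient q2 (@P3' X) ->           (* L = C2 / P3' *)
  (forall x, @P3_1 X x -> @d1 X x = 1) /\
  (forall x, @P3_1 X x <-> exists l, @P3' X l /\ @d2 X l = x) /\
  exists (d : M -> C0 X) (delta : L -> M)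
         (actM : C0 X -> M -> M) (actL : C0 X -> L -> L),
    is_hom d /\ (forall x, d (q1 x) = @d1 X x) /\
    is_hom delta /\ (forall l, delta (q2 l) = q1 (@d2 X l)) /\
    (forall n x, actM n (q1 x) = q1 (@act1 X n x)) /\
    (forall n l, actL n (q2 l) = q2 (@act2 X n l)) /\
    forall (Mcr C T : group) (p : M -> Mcr) (r : Mcr -> C) (t : C -> C -> T),
      is_quotient p (P2 d actM) ->                 (* Mcr = M^cr *)
      is_quotient r (gen (@commutators Mcr)) ->    (* C = (M^cr)^ab *)
      is_tensor_square t ->                        (* T = C (x) C *)
      exists omega : T -> L,
        is_hom omega /\
        (forall x y : C1 X, omega (t (r (p (q1 x))) (r (p (q1 y)))) = q2 (@lift X x y)) /\
        is_quadratic_module d actM delta actL p r t omega.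
Proof.
  intros hq1 hq2.
  split. { intros x; apply P3_d1. }
  split. { intro x; split; [apply P3_d2 | intros [l [hl <-]]; apply P3'_d2; exact hl]. }
  exists (@dM X M q1 hq1), (@delta X M L q1 q2 hq2), (@actM X M q1 hq1), (@actL X L q2 hq2).
  assert (Dh : is_hom (@delta X M L q1 q2 hq2)) by (eapply delta_hom; eassumption).
  assert (Dq : forall l, @delta X M L q1 q2 hq2 (q2 l) = q1 (d2 l)) by (intro; eapply delta_q2; eassumption).
  split. { apply dM_hom. }
  split. { apply dM_q1. }
  split. { exact Dh. }
  split. { exact Dq. }
  split. { intros; apply actM_q1. }
  split. { intros; apply actL_q2. }
  intros Mcr C T p r t hp hr ht.
  set (om := @omega X M L q1 q2 hq1 hq2 Mcr C T p r t hp hr ht).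
  exists om.
  assert (OT : forall x y, om (t (r (p (q1 x))) (r (p (q1 y)))) = q2 (lift x y)) by (intros; apply omega_t).
  assert (Oh : is_hom om) by apply omega_hom.
  split; [exact Oh|]. split; [exact OT|].
  unfold is_quadratic_module. cbv beta zeta.
  split. { apply nil2. }
  split. { exact hp. } split. { exact hr. } split. { exact ht. }
  exists (fun u => @delta X M L q1 q2 hq2 (om u)).
  split. { apply hom_comp; assumption. }
  split.
  { intros x y. destruct (quot_surj hq1 x) as [x0 <-]. destruct (quot_surj hq1 y) as [y0 <-].
    rewrite OT, Dq, d2_lift. symmetry; apply pfM_q1. }
  split. { exact Dh. }
  split. { exact Oh. }
  split. { intro l. eapply dM_delta; eassumption. }
  split. { reflexivity. }
  split. { apply actL_action. }
  split.
  { exists (@actC X M q1 hq1 Mcr C p r hp hr), (@actT X M q1 hq1 Mcr C T p r t hp hr ht).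
    split. { apply actC_action. }
    split. { intros n x. apply actC_bar. }
    split. { apply actT_action. }
    split. { intros; apply actT_spec. }
    split. { intros; apply omega_equiv. }
    intros n u. unfold om. rewrite omega_equiv. apply (delta_equiv hq1 hq2). }
  split. { intros; apply (delta_equiv hq1 hq2). }
  split.
  { intros x a. destruct (quot_surj hq1 x) as [x0 <-]. destruct (quot_surj hq2 a) as [a0 <-].
    rewrite Oh, Dq, !OT, dM_q1, actL_q2, <- (q2h hq2), CM4, <- (q2h hq2), mulgVK. reflexivity. }
  intros a b. destruct (quot_surj hq2 a) as [a0 <-]. destruct (quot_surj hq2 b) as [b0 <-].
  rewrite !Dq, OT, CM2. apply (hom_comm (q2h hq2)).
Qed.
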